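(* Let $N\ge1$, $K>0$, $r_i>0$, let $(\mu_{ij})$ be a nonnegative, symmetric, irreducible $N\times N$ matrix, and let $\Psi_1,\dots,\Psi_N:\mathbb{R}^N\to\mathbb{R}$ be locally Lipschitz with $\Psi_i(0)=0$, monotone increasing for the componentwise order, and such that for each $i$ there exist positive $R_i,k_i,c_i$ with $c_i(\sum_jv_j)^{k_i}\le\Psi_i(v)$ for all $v\in[0,\infty)^N$ with $\sum_j|v_j|\ge R_i$. Let $v(t)$ be a solution of the Cauchy problem $$\frac{dv_i}{dt}=v_i\left[r_i-\frac{1}{K}\Psi_i(v)\right]+\sum_{j=1}^N\mu_{ij}(v_j-v_i),\qquad i=1,\dots,N,$$ with nonnegative initial datum $v(0)$. Then there exist two constants $C_0,C_1$ and a vector $v_p$ with all components positive such that $v(t)\le C_0e^{C_1t}v_p$ componentwise for all $t$ in the interval of existence. *)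

(* Defs.v *)
From HB Require Import structures.
From mathcomp Require Import all_boot all_order all_algebra.
From mathcomp Require Import all_classical all_reals all_analysis.
Set Implicit Arguments. Unset Strict Implicit. Unset Printing Implicit Defensive.
Import Order.TTheory GRing.Theory Num.Theory.
Import numFieldNormedType.Exports.
Local Open Scope classical_set_scope.
Local Open Scope ring_scope.

Definition l1norm {R : realType} {N : nat} (v : 'I_N -> R) : R :=
  \sum_(j < N) `|v j|.

Definition vle {R : realType} {N : nat} (v w : 'I_N -> R) : Prop :=
  forall j, v j <= w j.

(* Irreducible N x N matrix: there is no nonempty proper subset S of indices
   with mu_ij = 0 for all i in S, j not in S (i.e. mu is not permutation-similar
   to a block triangular matrix). *)
Definition irreducible_mx {R : realType} {N : nat} (mu : 'M[R]_N) : Prop :=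
  forall S : {set 'I_N}, S != finset.set0 -> S != [set: 'I_N]%SET ->
    exists i j, [/\ i \in S, j \notin S & mu i j != 0].

Definition locally_lipschitz {R : realType} {N : nat} (f : ('I_N -> R) -> R) : Prop :=
  forall x, exists delta L : R, 0 < delta /\
    forall y z, l1norm (fun j => y j - x j) < delta ->
                l1norm (fun j => z j - x j) < delta ->
                `|f y - f z| <= L * l1norm (fun j => y j - z j).

Definition monotone_incr {R : realType} {N : nat} (f : ('I_N -> R) -> R) : Prop :=
  forall v w, vle v w -> f v <= f w.

Definition Iex {R : realType} (T : \bar R) : set R :=
  [set t | 0 <= t /\ (t%:E < T)%E].

(* Main.v *)
Require Import Defs.
From HB Require Import structures.
From mathcomp Require Import all_boot all_order all_algebra.
From mathcomp Require Import all_classical all_reals all_analysis.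
From mathcomp Require Import ring lra.
Import Order.TTheory GRing.Theory Num.Theory.
Import numFieldNormedType.Exports.
Local Open Scope classical_set_scope.
Local Open Scope ring_scope.


Lemma is_derive_quad {R : realType} (f : R -> R) (x c M : R) : 0 <= M ->
  (forall h, `|f (h + x) - f x - c * h| <= M * h ^+ 2) -> is_derive x 1 f c.
Proof.
move=> M0 Hf.
have L : (fun h : R => h^-1 *: ((f \o shift x) (h *: 1) - f x)) @ 0^' --> c.
  apply/cvgrPdist_lt => e e0.
  have eM : 0 < e / (M + 1) by rewrite divr_gt0 // ltr_wpDl.
  near=> h.
  have h0 : h != 0 by near: h; exact: nbhs_dnbhs_neq.
  have hs : `|h| < e / (M + 1).
    near: h; apply: (@nbhs_dnbhs _ (0:R)); exact: (@nbhs0_lt R R^o _ eM).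
  rewrite /= /shift /= [h *: 1]mulr1.
  have -> : c - h^-1 * (f (h + x) - f x) = - h^-1 * (f (h + x) - f x - c * h).
    by field.
  rewrite normrM normrN normrV ?unitfE //.
  have hp : 0 < `|h| by rewrite normr_gt0.
  apply: (@le_lt_trans _ _ (`|h|^-1 * (M * h ^+ 2))).
    by rewrite ler_wpM2l // invr_ge0.
  have -> : `|h|^-1 * (M * h ^+ 2) = M * `|h|.
    by rewrite -(real_normK (num_real h)); field; rewrite gt_eqF.
  rewrite ltr_pdivlMr ?ltr_wpDl // in hs.
  apply: le_lt_trans hs. rewrite mulrDr mulr1 mulrC lerDl //.
apply: DeriveDef; first by apply/cvg_ex; exists c.
exact: cvg_lim L.
Unshelve. all: by end_near. Qed.

Definition gneg {R : realType} (y : R) := Num.min y 0 ^+ 2.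

Lemma is_derive_gneg {R : realType} (x : R) : is_derive x (1:R) gneg (2 * Num.min x 0).
Proof.
apply: (@is_derive_quad _ _ x _ 1 ler01) => h; rewrite /gneg mul1r.
have [hx|hx] := leP x 0; have [hx2|hx2] := leP (h + x) 0.
- rewrite ler_norml; apply/andP; split; nra.
- rewrite ler_norml; apply/andP; split; nra.
- rewrite ler_norml; apply/andP; split; nra.
- rewrite ler_norml; apply/andP; split; nra.
Qed.

Lemma gronwall {R : realType} (f : R -> R) (C t0 : R) : 0 <= t0 ->
  {within `[0, t0], continuous f} ->
  (forall s, 0 < s -> s < t0 -> derivable f s 1 /\ derive1 f s <= C * f s) ->
  f t0 <= f 0 * expR (C * t0).
Proof.
move=> t00 cf df.
pose e := fun s : R => expR (- C * s).
have de : forall s, is_derive s (1:R) e (expR (- C * s) * (- C)).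
  move=> s; rewrite /e.
  have -> : (fun s => expR (- C * s)) = expR \o (fun s => - C * s) by [].
  apply: is_derive1_comp.
  have -> : (fun s : R => - C * s) = (- C) *: id by apply/funext => y.
  rewrite -[X in is_derive _ _ _ X]mulr1; exact: is_deriveZ.
have ce : continuous e.
  move=> s; have [ds _] := de s; exact/differentiable_continuous/derivable1_diffP.
pose h := f * e.
have key : h t0 <= h 0.
  apply: (@ler0_derive1_le_cc _ h 0 t0).
  - move=> s; rewrite in_itv /= => /andP[s0 st].
    have [fd _] := df s s0 st.
    by have [] := (is_deriveM (derivableP fd) (de s)).
  - move=> s; rewrite in_itv /= => /andP[s0 st].
    have [fd fle] := df s s0 st.
    have H := (is_deriveM (derivableP fd) (de s)).
    rewrite derive1E derive_val -derive1E /e.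
    have ep := expR_gt0 (- C * s).
    rewrite /GRing.scale /=. nra.
  - move=> x; apply: cvgM; [exact: cf | exact: (continuous_subspaceT ce)].
  - by rewrite in_itv /= lexx t00.
  - by rewrite in_itv /= lexx t00.
  - exact: t00.
have {}key : f t0 * expR (- C * t0) <= f 0 * expR (- C * 0) := key.
move: key; rewrite mulr0 expR0 mulr1 => key.
have -> : f t0 = f t0 * expR (- C * t0) * expR (C * t0).
  by rewrite -mulrA -expRD mulNr addNr expR0 mulr1.
by rewrite ler_pM2r ?expR_gt0.
Qed.

Lemma within_cont_sum {R : realType} (A : set R) n (F : 'I_n -> R -> R) :
  (forall i, {within A, continuous (F i)}) ->
  {within A, continuous (fun s => \sum_(i < n) F i s)}.
Proof.
elim: n F => [|n IH] F HF.
  have -> : (fun s => \sum_(i < 0) F i s) = fun _ => 0.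
    by apply/funext => s; rewrite big_ord0.
  by move=> x; apply: cvg_cst.
have -> : (fun s => \sum_(i < n.+1) F i s) =
   (fun s => \sum_(i < n) F (widen_ord (leqnSn n) i) s) \+ F ord_max.
  by apply/funext => s; rewrite big_ord_recr.
move=> x; apply: cvgD; last exact: HF.
exact: (IH (fun i => F (widen_ord (leqnSn n) i)) (fun i => HF _) x).
Qed.

Lemma le_sum_term {R : realType} {n : nat} (F : 'I_n -> R) i : (forall j, 0 <= F j) -> F i <= \sum_(j < n) F j.
Proof.
move=> H; rewrite (bigD1 i) //= lerDl; apply: sumr_ge0 => j _; exact: H.
Qed.


Lemma gneg_ge0 {R : realType} (x : R) : 0 <= gneg x.
Proof. by rewrite /gneg sqr_ge0. Qed.

Lemma gneg_mul {R : realType} (x : R) : Num.min x 0 * x = gneg x.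
Proof. rewrite /gneg; have [h|h] := leP x 0; first by rewrite expr2.
by rewrite expr2 !mul0r. Qed.

Lemma gneg_pw {R : realType} (x y m : R) : 0 <= m ->
  2 * Num.min x 0 * (m * (y - x)) <= m * gneg y.
Proof.
move=> m0; rewrite /gneg.
have h1 := mulr_ge0 m0 (sqr_ge0 (y - x)); have h2 := mulr_ge0 m0 (sqr_ge0 x).
have h3 := mulr_ge0 m0 (sqr_ge0 y).
have [hx|hx] := leP x 0; have [hy|hy] := leP y 0.
- nra.
- have h4 : 0 <= m * y * (- x) by apply: mulr_ge0; [apply: mulr_ge0 => //; exact: ltW | rewrite oppr_ge0].
  nra.
- nra.
- nra.
Qed.

Lemma gneg_0 {R : realType} (x : R) : 0 <= x -> gneg x = 0.
Proof. move=> h; rewrite /gneg; have [h'|h'] := leP x 0; last by rewrite expr2 mul0r.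
have -> : x = 0 by apply/eqP; rewrite eq_le h h'.
by rewrite expr2 mul0r. Qed.

Lemma gneg_le0 {R : realType} (x : R) : gneg x <= 0 -> 0 <= x.
Proof. by rewrite /gneg; have [h|h] := leP x 0 => H; [nra | exact: ltW]. Qed.
Theorem lemma2p3 (R : realType) (N : nat) (hN : (1 <= N)%N)
  (K : R) (r : 'I_N -> R) (mu : 'M[R]_N) (Psi : 'I_N -> ('I_N -> R) -> R)
  (T : \bar R) (v : R -> 'I_N -> R) :
  0 < K ->
  (forall i, 0 < r i) ->
  (forall i j, 0 <= mu i j) ->
  mu^T = mu ->
  irreducible_mx mu ->
  (forall i, locally_lipschitz (Psi i)) ->
  (forall i, Psi i (fun _ => 0) = 0) ->
  (forall i, monotone_incr (Psi i)) ->
  (forall i, exists Ri ki ci : R, [/\ 0 < Ri, 0 < ki, 0 < ci &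
     forall w : 'I_N -> R, (forall j, 0 <= w j) -> Ri <= l1norm w ->
       ci * (\sum_(j < N) w j) `^ ki <= Psi i w]) ->
  (0 < T)%E ->
  (forall i, {within Iex T, continuous (fun s => v s i)}) ->
  (forall i t, 0 < t -> (t%:E < T)%E ->
     derivable (fun s => v s i) t 1 /\
     derive1 (fun s => v s i) t =
       v t i * (r i - K^-1 * Psi i (v t)) + \sum_(j < N) mu i j * (v t j - v t i)) ->
  (forall i, 0 <= v 0 i) ->
  exists (C0 C1 : R) (vp : 'I_N -> R),
    (forall i, 0 < vp i) /\
    forall t, Iex T t -> forall i, v t i <= C0 * expR (C1 * t) * vp i.
Proof.
move=> K0 r0 mu0 musym _ _ Psi0 Psimon _ T0 vcont vder v00.
pose vi i := fun s => v s i.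
have IexW : forall t0, Iex T t0 -> `[0, t0] `<=` Iex T.
  move=> t0 [t00 t0T] s /=; rewrite in_itv /= => /andP[s0 st].
  split => //; apply: (le_lt_trans _ t0T); by rewrite lee_fin.
have derAt : forall t0 s, Iex T t0 -> 0 < s -> s < t0 -> forall i,
    derivable (vi i) s 1 /\ derive1 (vi i) s =
       v s i * (r i - K^-1 * Psi i (v s)) + \sum_(j < N) mu i j * (v s j - v s i).
  move=> t0 s [_ t0T] s0 st i; apply: vder => //.
  by apply: (lt_trans _ t0T); rewrite lte_fin.
have nonneg : forall t0, Iex T t0 -> forall i, 0 <= v t0 i.
  move=> t0 It0.
  have t00 : 0 <= t0 by case: It0.
  have csub : forall i, {within `[0, t0], continuous (vi i)}.
    move=> i; exact: (continuous_subspaceW (IexW t0 It0) (vcont i)).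
  have lb : forall j, exists b, forall s, s \in `[0, t0] -> b <= v s j.
    move=> j; have [c _ Hc] := EVT_min t00 (csub j).
    by exists (v c j) => s /Hc.
  have [bf Hbf] := choice lb.
  pose B := \sum_(j < N) `|bf j|.
  have HB : forall j s, s \in `[0, t0] -> - B <= v s j.
    move=> j s hs; apply: le_trans (Hbf j s hs).
    rewrite lerNl; apply: le_trans (ler_norm (- bf j)) _; rewrite normrN.
    by apply: (le_sum_term (fun j => `|bf j|)) => k.
  pose A := \sum_(i < N) (`|r i| + K^-1 * `|Psi i (fun _ => - B)|).
  have HA : forall i s, s \in `[0, t0] -> r i - K^-1 * Psi i (v s) <= A.
    move=> i s hs.
    have hP : Psi i (fun _ => - B) <= Psi i (v s) by apply: Psimon => j; exact: HB.
    apply: le_trans (le_sum_term (fun i => `|r i| + K^-1 * `|Psi i (fun _ => - B)|) i _).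
      apply: lerD; first exact: ler_norm.
      have Ki : 0 < K^-1 by rewrite invr_gt0.
      rewrite -mulrN; apply: ler_wpM2l; first exact: ltW.
      apply: (@le_trans _ _ (- Psi i (fun _ => - B))); first by rewrite lerN2.
      by rewrite -normrN ler_norm.
    move=> k; apply: addr_ge0 => //; apply: mulr_ge0 => //; rewrite invr_ge0 ltW //.
  have A0 : 0 <= A.
    apply: sumr_ge0 => i _; apply: addr_ge0 => //; apply: mulr_ge0 => //; rewrite invr_ge0 ltW //.
  pose M := \sum_(i < N) \sum_(j < N) mu i j.
  have HM : forall i j, mu i j <= M.
    move=> i j; apply: (le_trans (le_sum_term (fun j => mu i j) j _)) => //.
    apply: (le_sum_term (fun i => \sum_(j < N) mu i j) i) => k.
    by apply: sumr_ge0.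
  have M0 : 0 <= M by apply: sumr_ge0 => i _; apply: sumr_ge0.
  pose q := fun s => \sum_(i < N) gneg (v s i).
  have qge : forall s i, gneg (v s i) <= q s.
    by move=> s i; apply: (le_sum_term (fun i => gneg (v s i))) => k; apply: gneg_ge0.
  pose C := 2 * A + M *+ N *+ N.
  have G : q t0 <= q 0 * expR (C * t0).
    apply: gronwall => //.
      apply: (@within_cont_sum _ _ _ (fun i => gneg \o vi i)) => i x.
      apply: (@continuous_comp (subspace `[0, t0]) R R (vi i) gneg x); first exact: csub.
      have [dg _] := is_derive_gneg (vi i x).
      exact/differentiable_continuous/derivable1_diffP.
    move=> s s0 st.
    have dvi : forall i, is_derive s 1 (vi i) ('D_1 (vi i) s).
      by move=> i; apply: derivableP; case: (derAt t0 s It0 s0 st i).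
    have dq : is_derive s 1 q (\sum_(i < N) (2 * Num.min (vi i s) 0) * 'D_1 (vi i) s).
      have -> : q = \sum_(i < N) (gneg \o vi i) by rewrite fct_sumE.
      apply: is_derive_sum => i.
      exact: (is_derive1_comp (is_derive_gneg (vi i s)) (dvi i)).
    split; first by case: dq.
    rewrite derive1E derive_val.
    have sI : s \in `[0, t0] by rewrite in_itv /= !ltW.
    have Dv : forall i, 'D_1 (vi i) s =
       v s i * (r i - K^-1 * Psi i (v s)) + \sum_(j < N) mu i j * (v s j - v s i).
      by move=> i; rewrite -derive1E; case: (derAt t0 s It0 s0 st i).
    apply: (@le_trans _ _ (\sum_(i < N) (2 * A * gneg (v s i) + (M * q s) *+ N))).
      apply: ler_sum => i _; rewrite Dv mulrDr; apply: lerD.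
        have ha := HA i s sI; have hg := gneg_ge0 (v s i).
        have -> : 2 * Num.min (vi i s) 0 * (v s i * (r i - K^-1 * Psi i (v s))) =
            2 * gneg (v s i) * (r i - K^-1 * Psi i (v s)).
          by rewrite -gneg_mul /vi; ring.
        nra.
      rewrite mulr_sumr.
      apply: (@le_trans _ _ (\sum_(j < N) (M * q s))); last by rewrite sumr_const card_ord.
      apply: ler_sum => j _; apply: le_trans; first exact: (gneg_pw (v s i) (v s j) (mu i j) (mu0 i j)).
      by apply: ler_pM; [exact: mu0 | exact: gneg_ge0 | exact: HM | exact: qge].
    rewrite big_split /= -mulr_sumr sumr_const card_ord -!mulrnAl.
    by rewrite le_eqVlt; apply/orP; left; apply/eqP; rewrite /C /q; ring.
  have q00 : q 0 = 0 by rewrite /q; apply: big1 => i _; exact: gneg_0.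
  rewrite q00 mul0r in G.
  move=> i; apply: gneg_le0; exact: le_trans (qge t0 i) G.
have msym : forall i j, mu i j = mu j i by move=> i j; rewrite -[in LHS]musym mxE.
pose S := fun s => \sum_(i < N) v s i.
pose rho := \sum_(i < N) r i.
have rrho : forall i, r i <= rho.
  by move=> i; apply: (le_sum_term r) => k; exact: ltW.
exists (S 0), rho, (fun _ => 1); split => [i|t It]; first exact: ltr01.
have St : S t <= S 0 * expR (rho * t).
  apply: gronwall; first by case: It.
    apply: (@within_cont_sum _ _ _ vi) => i.
    exact: (continuous_subspaceW (IexW t It) (vcont i)).
  move=> s s0 st.
  have Is : Iex T s.
    split; first exact: ltW.
    case: It => _ tT; apply: lt_trans tT; by rewrite lte_fin.
  have dvi : forall i, is_derive s 1 (vi i) ('D_1 (vi i) s).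
    by move=> i; apply: derivableP; case: (derAt t s It s0 st i).
  have dS : is_derive s 1 S (\sum_(i < N) 'D_1 (vi i) s).
    have -> : S = \sum_(i < N) vi i by rewrite fct_sumE.
    exact: is_derive_sum.
  split; first by case: dS.
  rewrite derive1E derive_val.
  have Dv : forall i, 'D_1 (vi i) s =
     v s i * (r i - K^-1 * Psi i (v s)) + \sum_(j < N) mu i j * (v s j - v s i).
    by move=> i; rewrite -derive1E; case: (derAt t s It s0 st i).
  rewrite (eq_bigr _ (fun i _ => Dv i)) big_split /=.
  have Z : \sum_(i < N) \sum_(j < N) mu i j * (v s j - v s i) = 0.
    have E : \sum_(i < N) \sum_(j < N) mu i j * (v s j - v s i) =
        \sum_(i < N) \sum_(j < N) mu i j * v s j - \sum_(i < N) \sum_(j < N) mu i j * v s i.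
      rewrite -sumrB; apply: eq_bigr => i _; rewrite -sumrB; apply: eq_bigr => j _.
      by rewrite mulrBr.
    rewrite E exchange_big /=; apply/eqP; rewrite subr_eq0; apply/eqP.
    by apply: eq_bigr => j _; apply: eq_bigr => k _; rewrite msym.
  rewrite Z addr0 /S mulr_sumr; apply: ler_sum => i _.
  have vs0 : 0 <= v s i := nonneg s Is i.
  have Pp : 0 <= Psi i (v s).
    rewrite -(Psi0 i); apply: Psimon => j; exact: nonneg.
  have KP : 0 <= K^-1 * Psi i (v s) by apply: mulr_ge0 => //; rewrite invr_ge0 ltW.
  have := rrho i; nra.
move=> i; rewrite mulr1; apply: le_trans St.
by apply: (le_sum_term (fun i => v t i)) => k; exact: nonneg.
Qed.
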